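(* Fix $\gamma \geq 1$ and $0 \leq \rho < 1$. Let $A(u,v) = (u,u+v)$, $\mathbf{1} = (1,1)$, $\mathbf{c} = (\gamma,1)$, and let $T,M:\mathbb{R}^2\to\mathbb{R}^2$ be defined by $$T\mathbf{x} = \begin{cases} A\mathbf{x} + \mathbf{1}, & \langle \mathbf{c},\mathbf{x}\rangle \leq -1/2,\\ A\mathbf{x}, & |\langle \mathbf{c},\mathbf{x}\rangle| < 1/2,\\ A\mathbf{x} - \mathbf{1}, & \langle \mathbf{c},\mathbf{x}\rangle \geq 1/2,\end{cases}\qquad M(u,v) = \begin{cases} T(\rho u,\rho v), & u \geq 0,\\ T(u,v), & u<0.\end{cases}$$ Let $S^+ = \{(u,v) : -1/2 \leq \gamma u + v \leq 1/2 + \gamma,\ 0 \leq u < 1\}$, $S^- = \{(u,v) : -(1/2+\gamma) \leq \gamma u + v \leq 1/2,\ -1 \leq u < 0\}$, and $S = S^+\cup S^-$. If $\mathbf{x}_0 \in S$, then the iterates $\mathbf{x}_n = M^n\mathbf{x}_0$ eventually remain in $S^+$ (there exists $N$ with $\mathbf{x}_n \in S^+$ for all $n \geq N$), and $\|\mathbf{x}_n\| \to 0$ as $n \to \infty$.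
   Context: $\langle\cdot,\cdot\rangle$ is the standard inner product on $\mathbb{R}^2$. *)

(* Defs.v *)
From Stdlib Require Import Reals.
Open Scope R_scope.

Definition ip (x y : R * R) : R := fst x * fst y + snd x * snd y.
Definition norm2 (x : R * R) : R := sqrt (ip x x).

Definition A_map (x : R * R) : R * R := (fst x, fst x + snd x).

Definition T_map (gamma : R) (x : R * R) : R * R :=
  let s := ip (gamma, 1) x in
  let y := A_map x in
  if Rle_dec s (-(1/2)) then (fst y + 1, snd y + 1)
  else if Rlt_dec (Rabs s) (1/2) then y
  else (fst y - 1, snd y - 1).
  (* last branch: s >= 1/2 (since s > -1/2 and |s| >= 1/2) *)

Definition M_map (gamma rho : R) (x : R * R) : R * R :=
  if Rle_dec 0 (fst x) then T_map gamma (rho * fst x, rho * snd x)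
  else T_map gamma x.

Definition Splus (gamma : R) (x : R * R) : Prop :=
  let '(u, v) := x in
  -(1/2) <= gamma * u + v <= 1/2 + gamma /\ 0 <= u < 1.

Definition Sminus (gamma : R) (x : R * R) : Prop :=
  let '(u, v) := x in
  -(1/2 + gamma) <= gamma * u + v <= 1/2 /\ -1 <= u < 0.

Definition S_set (gamma : R) (x : R * R) : Prop := Splus gamma x \/ Sminus gamma x.

Fixpoint iter_M (gamma rho : R) (n : nat) (x : R * R) : R * R :=
  match n with
  | O => x
  | S k => M_map gamma rho (iter_M gamma rho k x)
  end.

(* Main.v *)
Require Import Defs.
From Stdlib Require Import Reals Lra Psatz Lia.
Open Scope R_scope.

Lemma M_spec g r u v :
  (0 <= u /\ r*(g*u+v) <= -(1/2) /\ M_map g r (u,v) = (r*u+1, r*u+r*v+1)) \/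
  (0 <= u /\ -(1/2) < r*(g*u+v) < 1/2 /\ M_map g r (u,v) = (r*u, r*u+r*v)) \/
  (0 <= u /\ 1/2 <= r*(g*u+v) /\ M_map g r (u,v) = (r*u-1, r*u+r*v-1)) \/
  (u < 0 /\ g*u+v <= -(1/2) /\ M_map g r (u,v) = (u+1, u+v+1)) \/
  (u < 0 /\ -(1/2) < g*u+v < 1/2 /\ M_map g r (u,v) = (u, u+v)) \/
  (u < 0 /\ 1/2 <= g*u+v /\ M_map g r (u,v) = (u-1, u+v-1)).
Proof.
  unfold M_map, T_map, A_map, ip; simpl.
  replace (g * (r * u) + 1 * (r * v)) with (r*(g*u+v)) by ring.
  replace (g * u + 1 * v) with (g*u+v) by ring.
  destruct (Rle_dec 0 u).
  - destruct (Rle_dec (r*(g*u+v)) (-(1/2))); [left; auto|].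
    destruct (Rlt_dec (Rabs (r*(g*u+v))) (1/2)) as [h|h].
    + apply Rabs_def2 in h. right; left; repeat split; lra.
    + right; right; left; repeat split; try lra.
      destruct (Rle_dec 0 (r*(g*u+v))). rewrite Rabs_right in h; lra.
      rewrite Rabs_left in h; lra.
  - destruct (Rle_dec (g*u+v) (-(1/2))); [do 3 right; left; split; [lra|auto]|].
    destruct (Rlt_dec (Rabs (g*u+v)) (1/2)) as [h|h].
    + apply Rabs_def2 in h. do 4 right; left; repeat split; lra.
    + do 5 right; repeat split; try lra.
      destruct (Rle_dec 0 (g*u+v)). rewrite Rabs_right in h; lra.
      rewrite Rabs_left in h; lra.
Qed.

Definition Pm g (x:R*R) : Prop := let '(u,v) := x in -(1/2+g) <= g*u+v < 1/2 /\ -1 <= u < 0.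
Definition Pset g x := Splus g x \/ Pm g x.
Definition Uf (x:R*R) : R := let '(u,v) := x in if Rle_dec 0 u then u else u+1.
Definition Vf g (x:R*R) : R := let '(u,v) := x in if Rle_dec 0 u then g*u+v else g*u+v+g+1.

Lemma step_plus g r u v: 1<=g -> 0<=r<1 -> Splus g (u,v) ->
  Pset g (M_map g r (u,v)) /\ Uf (M_map g r (u,v)) = r*u /\
  Vf g (M_map g r (u,v)) = r*(g*u+v+u) /\
  (r*(g*u+v) < 1/2 -> Splus g (M_map g r (u,v))) /\
  (1/2 <= r*(g*u+v) -> Pm g (M_map g r (u,v))).
Proof.
  intros hg hr [[h1 h2] [h3 h4]].
  assert (0 <= r*u < 1) by nra.
  assert (r*(g*u+v) <= g*u+v \/ g*u+v < 0) by nra.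
  assert (-(1/2) <= r*(g*u+v)) by nra.
  destruct (M_spec g r u v) as [[? [? ->]]|[[? [? ->]]|[[? [? ->]]|[[? [? ->]]|[[? [? ->]]|[? [? ->]]]]]]];
   try lra; unfold Pset, Uf, Vf, Splus, Pm;
   (destruct (Rle_dec 0 _); [|idtac]); repeat split; try nra.
Qed.

Lemma step_minus g r u v: 1<=g -> 0<=r<1 -> Pm g (u,v) ->
  Pset g (M_map g r (u,v)) /\ Uf (M_map g r (u,v)) = u+1 /\
  Vf g (M_map g r (u,v)) = (g*u+v+g+1) + (u+1) - 1.
Proof.
  intros hg hr [[h1 h2] [h3 h4]].
  destruct (M_spec g r u v) as [[? [? ->]]|[[? [? ->]]|[[? [? ->]]|[[? [? ->]]|[[? [? ->]]|[? [? ->]]]]]]];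
   try lra; unfold Pset, Uf, Vf, Splus, Pm;
   (destruct (Rle_dec 0 _); [|idtac]); repeat split; try nra.
Qed.

Section S.
Variables (g r : R).
Hypothesis hg : 1 <= g.
Hypothesis hr : 0 <= r < 1.

Lemma iter_add n m x : iter_M g r (n+m) x = iter_M g r n (iter_M g r m x).
Proof. induction n; simpl; auto. now rewrite IHn. Qed.

Lemma Pset_M x : Pset g x -> Pset g (M_map g r x).
Proof. destruct x as [u v]; intros [h|h].
  apply (step_plus g r u v hg hr h). apply (step_minus g r u v hg hr h). Qed.

Lemma Pset_iter k x : Pset g x -> Pset g (iter_M g r k x).
Proof. induction k; simpl; auto. intros; apply Pset_M; auto. Qed.

Lemma bounds x : Pset g x -> 0 <= Uf x < 1 /\ -(1/2) <= Vf g x /\ (Pm g x -> 1/2 <= Vf g x).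
Proof. destruct x as [u v]; unfold Uf, Vf; intros [h|h]; simpl in h;
  destruct (Rle_dec 0 u); repeat split; try lra; intros h'; simpl in h'; lra. Qed.

Lemma disj x : Splus g x -> Pm g x -> False.
Proof. destruct x; simpl; lra. Qed.

Lemma L1 n : forall x, Pm g x -> Vf g x - 1/2 < INR n * (1 - Uf x) ->
  exists k, Splus g (iter_M g r k x) /\ Uf (iter_M g r k x) = Uf x /\
     Vf g (iter_M g r k x) <= Vf g x - (1 - Uf x).
Proof.
  induction n; intros x hx hv.
  - destruct (bounds x (or_intror hx)) as [? [? h]]. specialize (h hx). simpl in hv; lra.
  - destruct x as [u v].
    destruct (step_minus g r u v hg hr hx) as [hp [hu hV]].
    destruct (bounds _ (or_intror hx)) as [hb _].
    assert (Uf (u,v) = u+1) by (unfold Uf; simpl in hx; destruct (Rle_dec 0 u); lra).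
    assert (Vf g (u,v) = g*u+v+g+1) by (unfold Vf; simpl in hx; destruct (Rle_dec 0 u); lra).
    destruct hp as [hp|hp].
    + exists 1%nat; change (iter_M g r 1 (u,v)) with (M_map g r (u,v)). repeat split; auto; lra.
    + destruct (IHn _ hp) as [k [h1 [h2 h3]]].
      { rewrite S_INR in hv. rewrite hu, hV. nra. }
      exists (k+1)%nat. rewrite iter_add. change (iter_M g r 1 (u,v)) with (M_map g r (u,v)). repeat split; auto; lra.
Qed.

Lemma L1' x : Pm g x ->
  exists k, Splus g (iter_M g r k x) /\ Uf (iter_M g r k x) = Uf x /\
     Vf g (iter_M g r k x) <= Vf g x - (1 - Uf x).
Proof.
  intros hx. destruct (bounds x (or_intror hx)) as [hb _].
  destruct (INR_archimed (1 - Uf x) (Vf g x - 1/2)) as [n hn]. lra.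
  apply (L1 n); auto.
Qed.

Lemma L2 n : forall x, Pset g x -> exists k, Pset g (iter_M g r k x) /\ Uf (iter_M g r k x) <= r^n.
Proof.
  induction n; intros x hx.
  - exists 0%nat; simpl; split; auto. destruct (bounds x hx); lra.
  - destruct (IHn x hx) as [k [hk hu]].
    set (y := iter_M g r k x) in *.
    assert (hz : exists j, Splus g (iter_M g r j y) /\ Uf (iter_M g r j y) = Uf y).
    { destruct hk as [h|h]. exists 0%nat; auto.
      destruct (L1' y h) as [j [? [? ?]]]. exists j; auto. }
    destruct hz as [j [hj1 hj2]].
    exists (1 + j + k)%nat. rewrite !iter_add. fold y.
    set (z := iter_M g r j y) in *. destruct z as [u v] eqn:Ez.
    destruct (step_plus g r u v hg hr hj1) as [? [h2 _]].
    simpl. split; auto. rewrite h2.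
    assert (Uf (u,v) = u) by (unfold Uf; simpl in hj1; destruct (Rle_dec 0 u); lra).
    simpl in hj1. nra.
Qed.

Definition G (x : R*R) : Prop := let '(u,v) := x in Splus g (u,v) /\ r*(g*u+v) < 1/2 /\ u <= (1-r)/4.

Lemma L3 n : forall x, Pset g x -> Uf x <= (1-r)/4 -> Vf g x < -(1/2) + INR n / 2 ->
  exists k, G (iter_M g r k x).
Proof.
  induction n; intros x hx hU hV.
  - destruct (bounds x hx) as [_ [h _]]. simpl in hV; lra.
  - rewrite S_INR in hV. destruct x as [u v]. destruct hx as [hx|hx].
    + assert (Uf (u,v) = u) by (unfold Uf; simpl in hx; destruct (Rle_dec 0 u); lra).
      assert (Vf g (u,v) = g*u+v) by (unfold Vf; simpl in hx; destruct (Rle_dec 0 u); lra).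
      destruct (Rlt_dec (r*(g*u+v)) (1/2)).
      * exists 0%nat. simpl in hx |- *. repeat split; lra.
      * destruct (step_plus g r u v hg hr hx) as [_ [h2 [h3 [_ h5]]]].
        assert (hm : Pm g (M_map g r (u,v))) by (apply h5; lra).
        destruct (L1' _ hm) as [j [hj1 [hj2 hj3]]].
        destruct (IHn (iter_M g r j (M_map g r (u,v)))) as [k hk].
        { left; auto. }
        { rewrite hj2, h2. simpl in hx. nra. }
        { rewrite h2, h3 in hj3. simpl in hx. nra. }
        exists (k + j + 1)%nat. rewrite !iter_add. simpl. auto.
    + assert (Uf (u,v) = u+1) by (unfold Uf; simpl in hx; destruct (Rle_dec 0 u); lra).
      destruct (L1' _ hx) as [j [hj1 [hj2 hj3]]].
      destruct (IHn (iter_M g r j (u,v))) as [k hk].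
      { left; auto. } { lra. } { lra. }
      exists (k + j)%nat. rewrite iter_add. auto.
Qed.

Lemma G_M x : G x -> G (M_map g r x) /\ M_map g r x = (r * fst x, r * fst x + r * snd x).
Proof.
  destruct x as [u v]; intros [hs [h1 h2]].
  simpl in hs.
  destruct (M_spec g r u v) as [[? [? ->]]|[[? [? ->]]|[[? [? ->]]|[[? [? ->]]|[[? [? ->]]|[? [? ->]]]]]]];
   try lra; simpl; split; auto. all: try (repeat split; nra).
  replace (g * (r * u) + (r * u + r * v)) with (r*(g*u+v) + r*u) by ring.
  assert (r*u <= u) by nra. assert (0 <= r*u) by nra.
  assert (r*(r*(g*u+v)) <= r*(1/2)) by nra. assert (r*(r*u) <= r*u) by nra.
  repeat split; nra.
Qed.



Lemma edge_abs q w p : 0<=w -> p+3*w <= 3/2 -> q*p >= 1/2 -> 0 <= q < 1 ->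
  q*(-q*p + q*w + 7/2 - p - 3*w) >= 1/2 /\
  (q*q*w + q - 1 < 0 -> q*(-q*p + q*w + 7/2 - p - 3*w) + q*q*w + q - (7/2 - p - 3*w) < 1/2 /\
       q*(-q*p + q*w + 7/2 - p - 3*w) + q*q*w + q - (7/2 - p - 3*w) >= -(3 - p - 3*w)) /\
  (q*q*w + q - 1 >= 0 -> q*(-q*p + q*w + 7/2 - p - 3*w) + q*q*w + q - (7/2 - p - 3*w) >= -(1/2) /\
       q*(-q*p + q*w + 7/2 - p - 3*w) + q*q*w + q - (7/2 - p - 3*w) <= 3 - p - 3*w).
Proof.
  intros h1 h2 h3 [h5 h4]. split; [nra|]. split; intros.
  - assert (0 <= (1-q)*(3/2-p-3*w)) by nra. assert (0 <= q*(q*p-1/2)) by nra. split; nra.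
  - assert (p >= 1/2) by nra. assert (0 <= q*q+q-1) by nra.
    assert (0 <= (q*q+q-1)*(3/2-p-3*w)) by nra. split; nra.
Qed.

Ltac mspec g r u v := destruct (M_spec g r u v) as [[? [? ->]]|[[? [? ->]]|[[? [? ->]]|[[? [? ->]]|[[? [? ->]]|[? [? ->]]]]]]].

Lemma entry x : S_set g x -> exists k, Pset g (iter_M g r k x).
Proof.
  destruct x as [u v]; intros [h|h].
  - exists 0%nat; left; auto.
  - simpl in h. destruct (Rlt_dec (g*u+v) (1/2)).
    + exists 0%nat; right; simpl; lra.
    + assert (e : v = 1/2 - g*u) by lra. subst v.
      assert (E1 : iter_M g r 1 (u, 1/2 - g*u) = (u-1, u - g*u - 1/2)).
      { simpl. mspec g r u (1/2 - g*u); try lra; f_equal; lra. }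
      assert (E2 : iter_M g r 2 (u, 1/2 - g*u) = (u, 2*u - g*u - 1/2)).
      { change (iter_M g r 2 (u, 1/2 - g*u)) with (M_map g r (iter_M g r 1 (u, 1/2 - g*u))).
        rewrite E1. mspec g r (u-1) (u - g*u - 1/2); try lra; f_equal; lra. }
      destruct (Rle_dec (-(1/2+g)) (2*u - 1/2)).
      { exists 2%nat. rewrite E2. right. simpl. lra. }
      assert (E3 : iter_M g r 3 (u, 1/2 - g*u) = (u+1, 3*u - g*u + 1/2)).
      { change (iter_M g r 3 (u, 1/2 - g*u)) with (M_map g r (iter_M g r 2 (u, 1/2 - g*u))).
        rewrite E2. mspec g r u (2*u - g*u - 1/2); try lra; f_equal; lra. }
      destruct (Rle_dec (-(1/2)) (g*(u+1) + (3*u - g*u + 1/2))).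
      { exists 3%nat. rewrite E3. left. simpl. lra. }
      assert (hr3 : r * (g*(u+1) + (3*u - g*u + 1/2)) < 1/2) by nra.
      destruct (Rle_dec (r * (g*(u+1) + (3*u - g*u + 1/2))) (-(1/2))).
      2: { exists 4%nat.
        change (iter_M g r 4 (u, 1/2 - g*u)) with (M_map g r (iter_M g r 3 (u, 1/2 - g*u))).
        rewrite E3. mspec g r (u+1) (3*u - g*u + 1/2); try lra. left. simpl. nra. }
      exists 5%nat.
      change (iter_M g r 5 (u, 1/2 - g*u)) with (M_map g r (M_map g r (iter_M g r 3 (u, 1/2 - g*u)))).
      rewrite E3. mspec g r (u+1) (3*u - g*u + 1/2); try lra.
      set (a := r*(u+1)+1). set (b := r*(u+1) + r*(3*u - g*u + 1/2) + 1).
      assert (hw : 0 <= r*(u+1)) by nra.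
      destruct (edge_abs r (u+1) (5/2 - g - 3*(u+1))) as [e1 [e2 e3]]; try lra; try nra.
      mspec g r a b; unfold a, b in *; try nra.
      destruct (Rlt_dec (r * (r * (u + 1) + 1) - 1) 0) as [q|q].
      * right. simpl. destruct e2 as [e4 e5]. lra. repeat split; try lra. nra.
      * left. simpl. destruct e3 as [e4 e5]. lra. repeat split; try lra; nra.
Qed.

Lemma G_iter k x : G x -> G (iter_M g r k x).
Proof. induction k; simpl; auto. intros h; apply G_M; auto. Qed.

Lemma G_splus x : G x -> Splus g x.
Proof. destruct x; simpl; tauto. Qed.

Definition af (x : R*R) := (1-r) * Rabs (g * fst x + snd x) + fst x.

Lemma af_M x : G x -> af (M_map g r x) <= r*(2-r) * af x.
Proof.
  intros h. destruct (G_M x h) as [_ ->]. destruct x as [u v]. destruct h as [[_ [hu _]] _].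
  unfold af; simpl.
  replace (g * (r * u) + (r * u + r * v)) with (r * ((g*u+v) + u)) by ring.
  rewrite Rabs_mult, (Rabs_right r) by lra.
  assert (Rabs (g*u+v+u) <= Rabs (g*u+v) + u) by (assert (H := Rabs_triang (g*u+v) u); rewrite (Rabs_right u) in H by lra; exact H).
  assert (0 <= Rabs (g*u+v)) by apply Rabs_pos.
  assert ((1-r)*(r*Rabs (g*u+v+u)) <= (1-r)*(r*(Rabs (g*u+v) + u))) by (apply Rmult_le_compat_l; nra).
  assert (0 <= r*((1-r)*((1-r)*Rabs (g*u+v)))) by (repeat apply Rmult_le_pos; lra). nra.
Qed.

Lemma af_iter k x : G x -> af (iter_M g r k x) <= (r*(2-r))^k * af x.
Proof.
  intros h. induction k; simpl. lra.
  assert (0 <= r*(2-r)) by nra.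
  eapply Rle_trans. apply af_M, G_iter, h. 
  nra.
Qed.

Lemma norm_af x : G x -> (1-r) * norm2 x <= (1+g) * af x.
Proof.
  destruct x as [u v]; intros [[_ [hu _]] _]. unfold norm2, ip, af; simpl.
  assert (hn : sqrt (u*u + v*v) <= u + Rabs v).
  { rewrite <- (sqrt_square (u + Rabs v)) by (generalize (Rabs_pos v); lra).
    apply sqrt_le_1_alt.
    assert (Rabs v * Rabs v = v * v) by (rewrite <- Rabs_mult; apply Rabs_right; nra).
    generalize (Rabs_pos v); nra. }
  assert (Rabs v <= Rabs (g*u+v) + g*u).
  { replace v with ((g*u+v) + - (g*u)) at 1 by ring.
    eapply Rle_trans. apply Rabs_triang. rewrite Rabs_Ropp, (Rabs_right (g*u)) by nra. lra. }
  assert (0 <= Rabs (g*u+v)) by apply Rabs_pos.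
  assert ((1-r)*sqrt (u*u+v*v) <= (1-r)*(u + Rabs (g*u+v) + g*u)) by (apply Rmult_le_compat_l; lra). assert (0 <= g*((1-r)*Rabs (g*u+v))) by (repeat apply Rmult_le_pos; lra). assert (0 <= r*((1+g)*u)) by (repeat apply Rmult_le_pos; lra). lra.
Qed.

End S.

Theorem proposition4 (gamma rho : R) (x0 : R * R) :
  1 <= gamma -> 0 <= rho < 1 -> S_set gamma x0 ->
  (exists N : nat, forall n : nat, (N <= n)%nat -> Splus gamma (iter_M gamma rho n x0)) /\
  Un_cv (fun n => norm2 (iter_M gamma rho n x0)) 0.
Proof.
  intros hg hr hS.
  destruct (entry gamma rho hg hr x0 hS) as [k0 hk0].
  set (y := iter_M gamma rho k0 x0) in *.
  destruct (pow_lt_1_zero rho) with (y := (1-rho)/4) as [N hN].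
  { rewrite Rabs_right; lra. } { lra. }
  destruct (L2 gamma rho hg hr N y hk0) as [k1 [hk1 hu1]].
  set (z := iter_M gamma rho k1 y) in *.
  assert (hu : Uf z <= (1-rho)/4).
  { specialize (hN N (le_n N)). rewrite Rabs_right in hN. lra.
    apply Rle_ge, pow_le; lra. }
  destruct (INR_archimed (1/2) (Vf gamma z + 1/2)) as [n hn]. lra.
  destruct (L3 gamma rho hg hr n z hk1 hu) as [k2 hk2]. lra.
  set (w := iter_M gamma rho k2 z) in *.
  assert (Ew : forall m, iter_M gamma rho (m + (k2 + k1 + k0)) x0 = iter_M gamma rho m w).
  { intros m. rewrite !iter_add. reflexivity. }
  assert (Hn : forall n, (k2+k1+k0 <= n)%nat -> iter_M gamma rho n x0 = iter_M gamma rho (n - (k2+k1+k0)) w).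
  { intros m hm. rewrite <- Ew. f_equal. lia. }
  split.
  - exists (k2+k1+k0)%nat. intros m hm. rewrite Hn by auto. apply (G_splus gamma rho), (G_iter gamma rho hg hr), hk2. all: auto.
  - intros eps heps.
    set (lam := rho*(2-rho)).
    assert (hl : 0 <= lam < 1) by (unfold lam; nra).
    assert (ha0 : 0 <= af gamma rho w).
    { unfold af. destruct w as [u v]. destruct hk2 as [[_ [hu0 _]] _]. simpl.
      generalize (Rabs_pos (gamma*u+v)). nra. }
    destruct (pow_lt_1_zero lam) with (y := eps*(1-rho)/((1+gamma)*(af gamma rho w + 1))) as [N1 hN1].
    { rewrite Rabs_right; lra. }
    { apply Rdiv_lt_0_compat. nra. nra. }
    exists (N1 + (k2+k1+k0))%nat. intros m hm.
    unfold R_dist. rewrite Rminus_0_r. rewrite Hn by lia.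
    set (j := (m - (k2+k1+k0))%nat).
    assert (hj : (j >= N1)%nat) by (unfold j; lia).
    specialize (hN1 j hj). rewrite Rabs_right in hN1 by (apply Rle_ge, pow_le; lra).
    assert (hG := G_iter gamma rho hg hr j w hk2).
    assert (h1 := norm_af gamma rho hg hr _ hG).
    assert (h2 := af_iter gamma rho hg hr j w hk2). fold lam in h2.
    assert (hnn : 0 <= norm2 (iter_M gamma rho j w)) by (unfold norm2; apply sqrt_pos).
    rewrite Rabs_right by lra.
    set (P := lam ^ j) in *.
    set (Nm := norm2 (iter_M gamma rho j w)) in *.
    set (Aj := af gamma rho (iter_M gamma rho j w)) in *.
    set (A0 := af gamma rho w) in *.
    assert (hP : P * ((1+gamma)*(A0+1)) < eps*(1-rho)).
    { apply (Rmult_lt_compat_r ((1+gamma)*(A0+1))) in hN1; [|nra].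
      unfold Rdiv in hN1. rewrite Rmult_assoc, Rinv_l in hN1 by nra. lra. }
    assert (0 <= P) by (unfold P; apply pow_le; lra).
    nra.
Qed.
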